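(* Let $t > 0$. Let $(e,r)$ denote the element of $\mathcal{U}_t$ that is crossed last by $X$ during $[0,t]$, and let $p(e^+)$ denote the parent of $e^+$. Then, conditionally on $e^+\neq\phi$ and $H_{t,p(e^+)}<\infty$, almost surely $\mathcal{U}_t \setminus \mathcal{U}_{H_{t,p(e^+)}}$ contains at most two elements.
   Context: $G$ is an infinite rooted tree (root $\phi$) of uniformly bounded degree each of whose vertices has at least two offspring; the parent of a non-root vertex is its neighbour closer to $\phi$. For an edge $e$, $e^+$ is its endpoint closer to $\phi$ and $e^-$ the other. Fix $T>0$. A bar is $(e,h)\in E(G)\times[0,T)$ with joints $(e^+,h),(e^-,h)$. Under $\mathbb{P}_T$, $\mathcal{B}$ is a Poisson process of bars of intensity one w.r.t. counting $\times$ Lebesgue measure. The meander $X:[0,\infty)\to V(G)\times[0,T)$ starts at $(\phi,0)$, moves from $(v,h)$ as $t\mapsto(v,(h+t)\bmod T)$ until reaching a joint of a bar in $\mathcal{B}$, then jumps (crosses the bar) to the other joint and continues likewise; it is right-continuous with left limits. $Y$ is the projection of $X$ to $V(G)$. $H_A=\inf\{u\ge0:Y(u)\in A\}$, $H_{s,A}=\inf\{u\ge s:Y(u)\in A\}$ ($\inf\emptyset=\infty$), singletons written without braces. For $t>0$, $\mathcal{U}_t$ is the set of bars $(e,r)$ crossed by $X$ during $[0,t]$ such that: $H_{e^+}<H_{e^-}<t$; $\{u\in[0,t]:Y(u)=e^+\}=[H_{e^+},H_{e^-})$; $H_{e^-}-H_{e^+}\le T/2$; and $\{u\in[0,t):Y(u)=e^-\}$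 is an interval with right endpoint strictly less than $t$. *)

(* Defs.v *)
From HB Require Import structures.
From mathcomp Require Import all_boot all_order all_algebra.
From mathcomp Require Import all_classical all_reals all_analysis.
Set Implicit Arguments. Unset Strict Implicit. Unset Printing Implicit Defensive.
Import Order.TTheory GRing.Theory Num.Theory.
Local Open Scope classical_set_scope.
Local Open Scope ring_scope.

Section Meander.
Variables (R : realType) (V : choiceType) (root : V) (par : V -> V) (T : R).

(* Rooted tree encoded by the parent map: edges are the non-root vertices
   e, with e^- = e and e^+ = par e. *)
Definition rooted_tree : Prop :=
  par root = root /\ forall v, exists n, iter n par v = root.

Definition children (v : V) : set V := [set w | w <> root /\ par w = v].

Definition bounded_degree : Prop :=
  exists D : nat, forall v, exists s : seq V, uniq s /\ [set` s] = children v /\ (size s <= D)%N.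

Definition two_offspring : Prop :=
  forall v, exists w1 w2, children v w1 /\ children v w2 /\ w1 <> w2.

Definition has_card (A : set R) (k : nat) : Prop :=
  exists s : seq R, uniq s /\ size s = k /\ [set` s] = A.

Definition pois (r : R) (k : nat) : R := r ^+ k / k`!%:R * expR (- r).

(* B : Omega -> set of bars (e, h), e a non-root vertex (the edge {e, par e}),
   h in [0,T); B is a Poisson process of intensity counting x Lebesgue. *)
Definition bar_PPP d (Omega : measurableType d) (P : probability Omega R)
  (B : Omega -> set (V * R)) : Prop :=
  (forall w e h, B w (e, h) -> e <> root /\ 0 <= h < T) /\
  forall (n : nat) (es : 'I_n -> V) (As : 'I_n -> set R),
    (forall i, es i <> root) ->
    (forall i, measurable (As i)) ->
    (forall i, As i `<=` [set h | 0 <= h < T]) ->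
    (forall i j, i != j -> es i = es j -> As i `&` As j = set0) ->
    forall ks : 'I_n -> nat,
      let E := \bigcap_(i in [set: 'I_n])
                 [set w | has_card [set h | As i h /\ B w (es i, h)] (ks i)] in
      measurable E /\
      P E = (\prod_(i < n) pois (fine (lebesgue_measure (As i))) (ks i))%:E.

Variable b : set (V * R).

Definition rmod (x : R) : R := x - T * (Num.floor (x / T))%:~R.

Definition joint (v : V) (h : R) : Prop :=
  (v <> root /\ b (v, h)) \/ (exists w, w <> root /\ par w = v /\ b (w, h)).

Definition other (v : V) (h : R) : V :=
  if `[< v <> root /\ b (v, h) >] then par v
  else xget root [set w | w <> root /\ par w = v /\ b (w, h)].

Definition is_next_wait (v : V) (h s : R) : Prop :=
  0 < s /\ joint v (rmod (h + s)) /\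
  forall s', 0 < s' < s -> ~ joint v (rmod (h + s')).

Definition next_wait (v : V) (h : R) : option R :=
  match pselect (exists s, is_next_wait v h s) with
  | left ex => Some (projT1 (cid ex))
  | right _ => None
  end.

(* states: (vertex, height, time) at the successive jumps *)
Definition step (st : V * R * R) : option (V * R * R) :=
  let: (v, h, tau) := st in
  match next_wait v h with
  | Some s => Some (other v (rmod (h + s)), rmod (h + s), tau + s)
  | None => None
  end.

Fixpoint chain (n : nat) : option (V * R * R) :=
  match n with
  | 0 => Some (root, 0, 0)
  | n.+1 => obind step (chain n)
  end.

(* X(u) : right-continuous meander *)
Definition X (u : R) : V * R :=
  xget (root, 0)
    [set p | exists n v h tau, chain n = Some (v, h, tau) /\ tau <= u /\
       (forall v' h' tau', chain n.+1 = Some (v', h', tau') -> u < tau') /\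
       p = (v, rmod (h + (u - tau)))].

Definition Y (u : R) : V := (X u).1.

Definition Hit (s : R) (A : set V) : \bar R :=
  ereal_inf [set u%:E | u in [set u | s <= u /\ A (Y u)]].

Definition cross_time (t : R) (e : V) (r tau : R) : Prop :=
  b (e, r) /\ tau <= t /\
  exists n v h tau0 v', chain n = Some (v, h, tau0) /\
    chain n.+1 = Some (v', r, tau) /\
    ((v = e /\ v' = par e) \/ (v = par e /\ v' = e)).

Definition is_interval (I : set R) : Prop :=
  forall x y z, I x -> I z -> x <= y <= z -> I y.

Definition U (t : R) : set (V * R) :=
  [set er | let e := er.1 in let r := er.2 in
    (exists tau, cross_time t e r tau) /\
    (Hit 0 [set par e] < Hit 0 [set e] < t%:E)%E /\
    [set u | 0 <= u <= t /\ Y u = par e] =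
      [set u | (Hit 0 [set par e] <= u%:E < Hit 0 [set e])%E] /\
    (Hit 0 [set e] - Hit 0 [set par e] <= (T / 2)%:E)%E /\
    (let I := [set u | 0 <= u < t /\ Y u = e] in is_interval I /\ sup I < t)].

Definition last_crossed (t : R) (e : V) (r : R) : Prop :=
  U t (e, r) /\ exists tau, cross_time t e r tau /\
    forall e' r' tau', U t (e', r') -> cross_time t e' r' tau' -> tau' <= tau.

End Meander.

(* Main.v *)
Require Import Defs.
From HB Require Import structures.
From mathcomp Require Import all_boot all_order all_algebra.
From mathcomp Require Import all_classical all_reals all_analysis.
From mathcomp Require Import lra.
Import Order.TTheory GRing.Theory Num.Theory.
Local Open Scope classical_set_scope.
Local Open Scope ring_scope.
Set Implicit Arguments. Unset Strict Implicit.

Section Det.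
Variables (R : realType) (V : choiceType) (root : V) (par : V -> V) (T : R) (b : set (V * R)).
Hypothesis Htree : rooted_tree root par.
Hypothesis Hb : forall e h, b (e, h) -> e <> root.

Local Notation chain := (chain root par T b).
Local Notation Y := (Y root par T b).

Lemma iter_root k : iter k par root = root.
Proof. elim: k => //= k ->; by case: Htree. Qed.

Lemma cycle_root x j : (0 < j)%N -> iter j par x = x -> x = root.
Proof.
move=> j0 hj; case: Htree => _ /(_ x) [n hn].
have H : forall m, iter (j * m) par x = x.
  elim=> [|m IH]; first by rewrite muln0.
  by rewrite mulnS iterD IH hj.
rewrite -(H n) -(subnK (leq_pmull n j0)) iterD hn iter_root //.
Qed.

Definition sdesc (w x : V) := exists2 k, (0 < k)%N & iter k par x = w.
Definition adj (v v' : V) := (v <> root /\ v' = par v) \/ (v' <> root /\ par v' = v).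

Lemma next_waitP v h s : next_wait root par T b v h = Some s -> is_next_wait root par T b v h s.
Proof. rewrite /next_wait; case: pselect => // ex [<-]; exact: projT2 (cid ex). Qed.

Lemma other_adj v h : joint root par b v h -> adj v (other root par b v h).
Proof.
move=> Hj; rewrite /other; case: asboolP => [[Hv _]|Hn]; first by left.
right.
have ex : exists w, [set w | w <> root /\ par w = v /\ b (w, h)] w.
  by case: Hj => [//|[w Hw]]; exists w.
by have [? [? _]] := xgetPex root ex.
Qed.

Lemma step_inv n v' h' a' : chain n.+1 = Some (v', h', a') ->
  exists v h a, chain n = Some (v, h, a) /\ a < a' /\ adj v v'.
Proof.
rewrite /=; case: (chain n) => [[[v h] a]|] //=.
rewrite /step; case E: next_wait => [s|] // [<- _ <-].
have [s0 [Hj _]] := next_waitP E.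
exists v, h, a; split => //; split; first by rewrite ltrDl.
exact: other_adj.
Qed.

Lemma chain_some_le m v h a : chain m = Some (v, h, a) -> forall n, (n <= m)%N ->
  exists v' h' a', chain n = Some (v', h', a').
Proof.
elim: m v h a => [|m IH] v h a Hm n.
  by rewrite leqn0 => /eqP ->; exists v, h, a.
rewrite leq_eqVlt => /orP [/eqP ->|]; first by exists v, h, a.
rewrite ltnS => Hn; have [v1 [h1 [a1 [H1 _]]]] := step_inv Hm.
exact: IH H1 n Hn.
Qed.

Lemma chain_mono n m v h a v2 h2 c : (n < m)%N -> chain n = Some (v, h, a) ->
  chain m = Some (v2, h2, c) -> a < c.
Proof.
elim: m v2 h2 c => [|m IH] v2 h2 c //.
rewrite ltnS leq_eqVlt => /orP [/eqP ->|Hnm] Hn Hm.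
  have [v1 [h1 [a1 [H1 [Hl _]]]]] := step_inv Hm.
  by move: H1; rewrite Hn => -[_ _ ->].
have [v1 [h1 [a1 [H1 [Hl _]]]]] := step_inv Hm.
exact: lt_trans (IH _ _ _ Hnm Hn H1) Hl.
Qed.

Lemma chain_le n m v h a v2 h2 c : (n <= m)%N -> chain n = Some (v, h, a) ->
  chain m = Some (v2, h2, c) -> a <= c.
Proof.
rewrite leq_eqVlt => /orP [/eqP ->|Hnm] Hn Hm.
  by move: Hm; rewrite Hn => -[_ _ ->].
by apply: ltW; apply: chain_mono Hnm Hn Hm.
Qed.

Lemma chain_nonneg n v h a : chain n = Some (v, h, a) -> 0 <= a.
Proof.
case: n => [[_ _ <-] //|n Hn].
by apply: ltW; apply: (@chain_mono 0 n.+1 root 0 0) Hn.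
Qed.

Lemma Ychar n v h a u : chain n = Some (v, h, a) -> a <= u ->
  (forall v' h' a', chain n.+1 = Some (v', h', a') -> u < a') -> Y u = v.
Proof.
move=> Hn Hau Hnext; rewrite /Y /X.
rewrite (@xget_unique _ _ _ (v, rmod T (h + (u - a)))) //.
  by exists n, v, h, a.
move=> y [m [v2 [h2 [a2 [Hm [Ha2 [Hn2 ->]]]]]]].
case: (ltngtP m n) => [mn|nm|emn].
- have [v3 [h3 [a3 H3]]] := chain_some_le Hn mn.
  have := Hn2 _ _ _ H3; have := chain_le mn H3 Hn.
  move=> h1 h2'; have := le_lt_trans h1 (le_lt_trans Hau h2').
  by rewrite ltxx.
- have [v3 [h3 [a3 H3]]] := chain_some_le Hm nm.
  have := Hnext _ _ _ H3; have := chain_le nm H3 Hm.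
  move=> h1 h2'; have := le_lt_trans h1 (le_lt_trans Ha2 h2').
  by rewrite ltxx.
- by move: Hm; rewrite emn Hn => -[-> -> ->].
Qed.

Definition zeno u := forall n, exists v h a, chain n = Some (v, h, a) /\ a <= u.
Definition seg u n v := exists h a, chain n = Some (v, h, a) /\ a <= u /\
  (forall v' h' a', chain n.+1 = Some (v', h', a') -> u < a').

Lemma Yzeno u : zeno u -> Y u = root.
Proof.
move=> HZ; rewrite /Y /X xgetPN //.
move=> p [n [v [h [a [Hn [_ [Hnext _]]]]]]].
have [v' [h' [a' [Hn1 Ha']]]] := HZ n.+1.
by have := lt_le_trans (Hnext _ _ _ Hn1) Ha'; rewrite ltxx.
Qed.

Lemma zeno_mono u u' : u <= u' -> zeno u -> zeno u'.
Proof.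
move=> uu HZ n; have [v [h [a [Hn Ha]]]] := HZ n.
by exists v, h, a; split => //; apply: le_trans Ha uu.
Qed.

Lemma segY u n v : seg u n v -> Y u = v.
Proof. by move=> [h [a [Hn [Ha Hnext]]]]; apply: Ychar Hn Ha Hnext. Qed.

Lemma SEG u : 0 <= u -> (exists n v, seg u n v) \/ zeno u.
Proof.
move=> u0.
have Q : forall N, (exists n v, seg u n v) \/
   (forall m, (m <= N)%N -> exists v h a, chain m = Some (v, h, a) /\ a <= u).
  elim=> [|N [S|A]]; [right|by left|].
    by move=> m; rewrite leqn0 => /eqP ->; exists root, 0, 0.
  case E: (chain N.+1) => [[[v' h'] a']|].
    have [le|lt] := leP a' u.
      right => m; rewrite leq_eqVlt => /orP [/eqP ->|]; first by exists v', h', a'.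
      by rewrite ltnS; apply: A.
    left; have [v [h [a [Hn Ha]]]] := A N (leqnn N).
    exists N, v, h, a; split => //; split => // v2 h2 a2.
    by rewrite E => -[_ _ <-].
  left; have [v [h [a [Hn Ha]]]] := A N (leqnn N).
  by exists N, v, h, a; split => //; split => // v2 h2 a2; rewrite E.
case: (pselect (exists n v, seg u n v)) => [S|nS]; [by left|right].
by move=> n; case: (Q n) => // A; apply: A n (leqnn n).
Qed.

Lemma sdesc_root y : sdesc root y.
Proof.
case: Htree => Hr /(_ y) [[|n] hn].
  by exists 1%N => //; move: hn => /= ->.
by exists n.+1.
Qed.

Lemma dbarrier w m vm hm am : chain m = Some (vm, hm, am) -> sdesc w vm ->
  forall n vn hn an, (m <= n)%N -> chain n = Some (vn, hn, an) -> ~ sdesc w vn ->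
  exists j h a, (m < j <= n)%N /\ chain j = Some (w, h, a).
Proof.
move=> Hm Hsm; elim=> [|n IH] vn hn an.
  by rewrite leqn0 => /eqP e; move: Hm; rewrite e => -> [<- _ _].
rewrite leq_eqVlt => /orP [/eqP e|]; first by move: Hm; rewrite e => -> [<- _ _].
rewrite ltnS => mn Hn Hns.
have [v [h [a [Hv [_ Hadj]]]]] := step_inv Hn.
case: (pselect (sdesc w v)) => [[k k0 Hk]|nv].
  case: Hadj => [[vr evn]|[vnr pvn]].
    case: k k0 Hk => [//|[|k]] _ Hk.
      exists n.+1, hn, an; split; first by apply/andP; split; [rewrite ltnS|].
      by rewrite Hn evn -Hk.
    by exfalso; apply: Hns; exists k.+1 => //; rewrite evn -iterSr.
  by exfalso; apply: Hns; exists k.+1 => //; rewrite iterSr pvn.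
have [j [h' [a' [/andP [mj jn] Hj]]]] := IH _ _ _ mn Hv nv.
by exists j, h', a'; rewrite mj /= (leq_trans jn).
Qed.

Lemma seg_le u u' n v n' v' : u <= u' -> seg u n v -> seg u' n' v' -> (n <= n')%N.
Proof.
move=> uu [h [a [Hn [Ha Hnx]]]] [h' [a' [Hn' [Ha' Hnx']]]].
rewrite leqNgt; apply/negP => nn.
have [v2 [h2 [a2 H2]]] := chain_some_le Hn nn.
have := Hnx' _ _ _ H2; have := chain_le nn H2 Hn.
move=> l1 l2; have := le_lt_trans l1 (le_lt_trans (le_trans Ha uu) l2).
by rewrite ltxx.
Qed.

Lemma cbarrier w u0 u1 : 0 <= u0 -> u0 <= u1 -> sdesc w (Y u0) -> ~ sdesc w (Y u1) ->
  (exists u, u0 < u <= u1 /\ Y u = w) \/ (forall u', u1 <= u' -> Y u' = root).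
Proof.
move=> u00 u01 H0 H1.
case: (SEG u00) => [[n0 [v0 S0]]|Z0].
  case: (SEG (le_trans u00 u01)) => [[n1 [v1 S1]]|Z1]; last first.
    by right => u' uu; apply: Yzeno; apply: zeno_mono uu Z1.
  have nn := seg_le u01 S0 S1.
  move: (S0) (S1) => [h0 [a0 [Hn0 [Ha0 Hnx0]]]] [h1 [a1 [Hn1 [Ha1 Hnx1]]]].
  rewrite (segY S0) in H0; rewrite (segY S1) in H1.
  have [j [h [a [/andP [n0j jn1] Hj]]]] := dbarrier Hn0 H0 nn Hn1 H1.
  left; exists a; split; last first.
    apply: (Ychar Hj (lexx a)) => v' h' a' Hj1.
    exact: chain_mono (ltnSn j) Hj Hj1.
  apply/andP; split.
    have [v2 [h2 [a2 H2]]] := chain_some_le Hj n0j.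
    exact: lt_le_trans (Hnx0 _ _ _ H2) (chain_le n0j H2 Hj).
  exact: le_trans (chain_le jn1 Hj Hn1) Ha1.
exfalso; rewrite (Yzeno Z0) in H0.
move: H0 => [k k0]; rewrite iter_root => ew; subst w.
by apply: H1; apply: sdesc_root.
Qed.

Local Notation Hit := (Hit root par T b).
Local Notation U := (U root par T b).

Lemma Hit_ge s A : (s%:E <= Hit s A)%E.
Proof. apply: le_ereal_inf_tmp => _ [u [su _] <-]; by rewrite lee_fin. Qed.

Lemma Hit_le s A u : s <= u -> A (Y u) -> (Hit s A <= u%:E)%E.
Proof. move=> su Au; apply: ereal_inf_lbound; by exists u. Qed.

Lemma Hit_lt s A x : (Hit s A < x)%E -> exists u, s <= u /\ A (Y u) /\ (u%:E < x)%E.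
Proof. move=> /ereal_inf_lt [_ [u [su Au] <-] ux]; by exists u. Qed.

Lemma Uinv t f r : U t (f, r) ->
  (exists tau, cross_time root par T b t f r tau) /\
  (Hit 0 [set par f] < Hit 0 [set f])%E /\ (Hit 0 [set f] < t%:E)%E /\
  (forall u, (0 <= u <= t /\ Y u = par f) <-> (Hit 0 [set par f] <= u%:E < Hit 0 [set f])%E) /\
  (Hit 0 [set f] - Hit 0 [set par f] <= (T / 2)%:E)%E /\
  Defs.is_interval [set u | 0 <= u < t /\ Y u = f] /\ sup [set u | 0 <= u < t /\ Y u = f] < t.
Proof.
rewrite /U /= => -[Hc [/andP [H1 H2] [Hv [Hl [Hi Hs]]]]].
split => //; split => //; split => //; split; last by split => //; split.
by move=> u; have := congr1 (fun S => S u) Hv => /= ->.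
Qed.

Lemma Ubuild t f r :
  (exists tau, cross_time root par T b t f r tau) ->
  (Hit 0 [set par f] < Hit 0 [set f])%E -> (Hit 0 [set f] < t%:E)%E ->
  (forall u, (0 <= u <= t /\ Y u = par f) <-> (Hit 0 [set par f] <= u%:E < Hit 0 [set f])%E) ->
  (Hit 0 [set f] - Hit 0 [set par f] <= (T / 2)%:E)%E ->
  Defs.is_interval [set u | 0 <= u < t /\ Y u = f] -> sup [set u | 0 <= u < t /\ Y u = f] < t ->
  U t (f, r).
Proof.
move=> Hc H1 H2 Hv Hl Hi Hs; rewrite /U /=.
split => //; split; first by rewrite H1 H2.
split; last by [].
by apply/seteqP; split => u /= /Hv.
Qed.

Lemma par_neq f : f <> root -> par f <> f.
Proof. by move=> fr e; apply: fr; apply: (@cycle_root f 1). Qed.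

Lemma Ynext n v h a : chain n = Some (v, h, a) -> Y a = v.
Proof.
move=> Hn; apply: (Ychar Hn (lexx a)) => ? ? ? H2.
exact: chain_mono (ltnSn n) Hn H2.
Qed.

Lemma cross_U t f r tau : U t (f, r) -> cross_time root par T b t f r tau ->
  exists n h0 a0, chain n = Some (par f, h0, a0) /\ chain n.+1 = Some (f, r, tau) /\
    Hit 0 [set f] = tau%:E.
Proof.
move=> /Uinv [_ [HAB [HBt [Hv _]]]] [Hbf [taut [n [v [h [a0 [v' [Hn [Hn1 Hvv]]]]]]]]].
have fr := Hb Hbf.
have a00 := chain_nonneg Hn.
have a0t : a0 < tau := chain_mono (ltnSn n) Hn Hn1.
have Ya0 : Y a0 = v := Ynext Hn.
have Ytau : Y tau = v' := Ynext Hn1.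
have tt : 0 <= tau <= t by rewrite (le_trans a00 (ltW a0t)) taut.
have a0tt : 0 <= a0 <= t by rewrite a00 (le_trans (ltW a0t) taut).
case: Hvv => [[ev ev']|[ev ev']]; move: ev ev' Ya0 Ytau Hn Hn1 => -> -> Ya0 Ytau Hn Hn1.
  exfalso.
  have /andP [_ tB] := (Hv tau).1 (conj tt Ytau).
  have Ba0 := @Hit_le 0 [set f] a0 a00 Ya0.
  by have := lt_le_trans tB Ba0; rewrite lte_fin => /(lt_trans a0t); rewrite ltxx.
exists n, h, a0; split => //; split => //.
have Bt := @Hit_le 0 [set f] tau (le_trans a00 (ltW a0t)) Ytau.
apply/eqP; rewrite eq_le Bt /= leNgt; apply/negP => /Hit_lt [u [u0 [Yu ut]]].
rewrite lte_fin in ut.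
have [le|lt] := leP a0 u.
  have : Y u = par f.
    apply: (Ychar Hn le) => ? ? ? H2; by move: H2; rewrite Hn1 => -[_ _ <-].
  by rewrite Yu => /esym; apply: par_neq.
have /andP [_ a0B] := (Hv a0).1 (conj a0tt Ya0).
have := @Hit_le 0 [set f] u u0 Yu.
move=> /(lt_le_trans a0B); rewrite lte_fin => /(lt_trans lt).
by rewrite ltxx.
Qed.

Lemma U_uniq t f r1 r2 : U t (f, r1) -> U t (f, r2) -> r1 = r2.
Proof.
move=> U1 U2.
have [[tau1 C1] _] := Uinv U1; have [[tau2 C2] _] := Uinv U2.
have [n1 [_ [_ [_ [H1 E1]]]]] := cross_U U1 C1.
have [n2 [_ [_ [_ [H2 E2]]]]] := cross_U U2 C2.
have e12 : tau1 = tau2 by move: E1; rewrite E2 => -[].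
case: (ltngtP n1 n2) => [lt|lt|e].
- have lt' : (n1.+1 < n2.+1)%N by rewrite ltnS.
  by have := chain_mono lt' H1 H2; rewrite e12 ltxx.
- have lt' : (n2.+1 < n1.+1)%N by rewrite ltnS.
  by have := chain_mono lt' H2 H1; rewrite e12 ltxx.
- by move: H2; rewrite -e H1 => -[].
Qed.

Lemma child t f r n h0 a0 tau : U t (f, r) -> chain n = Some (par f, h0, a0) ->
  chain n.+1 = Some (f, r, tau) -> Hit 0 [set f] = tau%:E ->
  exists c hc ac, chain n.+2 = Some (c, hc, ac) /\ par c = f /\ ac < t.
Proof.
move=> /Uinv [[tau' [Hbf _]] [_ [HBt [Hv [_ [Hint Hsup]]]]]] Hn Hn1 EB.
set I := [set u | _] in Hint Hsup.
have fr := Hb Hbf.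
have a00 := chain_nonneg Hn; have a0t := chain_mono (ltnSn n) Hn Hn1.
have tau0 : 0 <= tau := le_trans a00 (ltW a0t).
have taut : tau < t by rewrite -lte_fin -EB.
have ubI : has_ubound I by exists t => u [/andP [_ ut] _]; exact: ltW.
have full : (forall u, tau <= u < t -> Y u = f) -> False.
  move=> Hf.
  have [le|lt] := leP tau (sup I).
    have Ix : I ((sup I + t) / 2).
      split; last by apply: Hf; apply/andP; split; lra.
      apply/andP; split; lra.
    have := ub_le_sup ubI Ix; lra.
  have Ix : I ((tau + t) / 2).
    split; last by apply: Hf; apply/andP; split; lra.
    apply/andP; split; lra.
  have := ub_le_sup ubI Ix; lra.
case E: (chain n.+2) => [[[c hc] ac]|].
  have [le|lt] := leP t ac.
    exfalso; apply: full => u /andP [tu ut].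
    apply: (Ychar Hn1 tu) => ? ? ? H2; move: H2; rewrite E => -[_ _ <-].
    exact: lt_le_trans ut le.
  have [v [h [a [Hv' [_ Hadj]]]]] := step_inv E.
  move: Hv'; rewrite Hn1 => -[ev _ ea]; subst v a.
  case: Hadj => [[_ ec]|[cr pc]]; last by exists c, hc, ac.
  exfalso.
  have ac0 : 0 <= ac <= t by rewrite (le_trans tau0 (ltW (chain_mono (ltnSn n.+1) Hn1 E))) ltW.
  have Yac : Y ac = par f by rewrite (Ynext E) ec.
  have /andP [_ acB] := (Hv ac).1 (conj ac0 Yac).
  move: acB; rewrite EB lte_fin => acB.
  by have := lt_trans acB (chain_mono (ltnSn n.+1) Hn1 E); rewrite ltxx.
exfalso; apply: full => u /andP [tu ut].
by apply: (Ychar Hn1 tu) => ? ? ?; rewrite E.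
Qed.

Lemma main t e r : 0 < t -> last_crossed root par T b t e r -> par e <> root ->
  (Hit t [set par (par e)] < +oo)%E ->
  exists a1 a2, forall x, (U t `\` U (fine (Hit t [set par (par e)]))) x -> x = a1 \/ x = a2.
Proof.
move=> t0 [Ue [tau [Ce Cmax]]] per.
set pp := par (par e).
have HtH := Hit_ge t [set pp].
have Hmin' : forall u, t <= u -> Y u = pp -> (Hit t [set pp] <= u%:E)%E.
  by move=> u tu Yu; apply: Hit_le.
move=> Hfin.
have [us [tus [Yus _]]] := Hit_lt Hfin.
move: HtH Hmin' Hfin.
case EH: (Hit t [set pp]) => [H| |] //=.
rewrite lee_fin => tH Hmin' _.
have Hmin : forall u, t <= u -> Y u = pp -> H <= u.
  by move=> u tu Yu; rewrite -lee_fin Hmin'.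
move: tH; rewrite le_eqVlt => /orP [/eqP tH|tH].
  by exists (e, r), (e, r) => x [Ux nUx]; exfalso; apply: nUx; rewrite -tH.
have ed : e <> root := Hb (proj1 Ce).
have [ne [he0 [ae0 [Hne [Hne1 EBe]]]]] := cross_U Ue Ce.
have [ce [hce [ace [Hne2 [pce acet]]]]] := child Ue Hne Hne1 EBe.
have [_ [HABe [HBte [Hve _]]]] := Uinv Ue.
have taut : tau < t by rewrite -lte_fin -EBe.
have Yt : sdesc pp (Y t).
  case: (SEG (ltW t0)) => [[n [v S]]|Z].
    rewrite (segY S); move: S => [h [a [Hn [Hat Hnx]]]].
    have nn : (ne.+2 <= n)%N.
      rewrite leqNgt; apply/negP => nl.
      have [v2 [h2 [a2 H2]]] := chain_some_le Hne2 nl.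
      have := Hnx _ _ _ H2; have := chain_le nl H2 Hne2.
      move=> l1 l2; have := lt_le_trans l2 l1.
      by move=> /(lt_trans acet); rewrite ltxx.
    have Hsd : sdesc (par e) ce by exists 2%N => //=; rewrite pce.
    case: (pselect (sdesc (par e) v)) => [[k k0 Hk]|nsd].
      by exists k.+1 => //; rewrite iterS Hk.
    exfalso.
    have [j [hj [aj [/andP [lj jn] Hj]]]] := dbarrier Hne2 Hsd nn Hn nsd.
    have Yaj := Ynext Hj.
    have aj0 := chain_nonneg Hj.
    have ajt := le_trans (chain_le jn Hj Hn) Hat.
    have ajtt : 0 <= aj <= t by rewrite aj0 ajt.
    have /andP [_ ajB] := (Hve aj).1 (conj ajtt Yaj).
    move: ajB; rewrite EBe lte_fin => ajB.
    have := chain_mono (ltnW lj) Hne1 Hj.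
    by move=> /(lt_trans ajB); rewrite ltxx.
  exfalso.
  have ppr : pp = root by rewrite -Yus; apply: Yzeno; apply: zeno_mono tus Z.
  have := Hmin t (lexx t); rewrite (Yzeno Z) ppr => /(_ erefl).
  by rewrite leNgt tH.
have KT : forall u, t <= u < H -> sdesc pp (Y u).
  move=> u /andP [tu uH].
  case: (pselect (sdesc pp (Y u))) => // ns; exfalso.
  case: (cbarrier (ltW t0) tu Yt ns) => [[u' [/andP [tu' u'u] Yu']]|Z].
    have := Hmin u' (ltW tu') Yu'.
    by rewrite leNgt (le_lt_trans u'u uH).
  have [le|lt] := leP u us.
    have ppr : pp = root by rewrite -Yus; apply: Z.
    have := Hmin u tu; rewrite (Z u (lexx u)) ppr => /(_ erefl).
    by rewrite leNgt uH.
  have := Hmin us tus Yus.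
  by rewrite leNgt (lt_trans lt uH).
have YH : Y H = pp.
  case: (SEG (le_trans (ltW t0) (ltW tH))) => [[n [v S]]|Z].
    rewrite (segY S); move: S => [h [a [Hn [HaH Hnx]]]].
    case E: (chain n.+1) => [[[v' h'] a']|].
      have Ha' := Hnx _ _ _ E.
      have HH : (Hit t [set pp] < a'%:E)%E by rewrite EH lte_fin.
      have [u [tu [Yu ua']]] := Hit_lt HH.
      have Hu := Hmin u tu Yu.
      rewrite -Yu; symmetry; apply: (Ychar Hn (le_trans HaH Hu)).
      by move=> ? ? ?; rewrite E => -[_ _ <-]; rewrite -lte_fin.
    rewrite -Yus; symmetry; apply: (Ychar Hn (le_trans HaH (Hmin _ tus Yus))).
    by move=> ? ? ?; rewrite E.
  rewrite (Yzeno Z) -Yus (Yzeno (zeno_mono (Hmin _ tus Yus) Z)) //.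
have key : forall f r', U t (f, r') -> ~ U H (f, r') -> f = e \/ f = par e.
  move=> f r' Uf nUf.
  case: (pselect (f = e)) => [->|fe]; first by left.
  case: (pselect (f = par e)) => [->|fpe]; first by right.
  exfalso; apply: nUf.
  have [[tf Cf] [HABf [HBtf [Hvf [Hlf [Hif Hsf]]]]]] := Uinv Uf.
  have fr : f <> root := Hb (proj1 Cf).
  have [nf [hf0 [af0 [Hnf [Hnf1 EBf]]]]] := cross_U Uf Cf.
  have tfe : tf <= tau := Cmax _ _ _ Uf Cf.
  have nfe : (nf < ne)%N.
    case: (ltngtP nf ne) => // [lt|eq].
      have lt' : (ne.+1 < nf.+1)%N by rewrite ltnS.
      by have := chain_mono lt' Hne1 Hnf1; rewrite ltNge tfe.
    by exfalso; apply: fe; move: Hnf1; rewrite eq Hne1 => -[].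
  have [cf [hcf [acf [Hnf2 [pcf acft]]]]] := child Uf Hnf Hnf1 EBf.
  have sde : sdesc f e.
    case: (pselect (sdesc f e)) => // ns; exfalso.
    have Hsd : sdesc f cf by exists 1%N.
    have nn : (nf.+2 <= ne.+1)%N by rewrite ltnS.
    have [j [hj [aj [/andP [lj jn] Hj]]]] := dbarrier Hnf2 Hsd nn Hne1 ns.
    have Yaj := Ynext Hj.
    have aj0 := chain_nonneg Hj.
    have ajt := lt_le_trans (le_lt_trans (chain_le jn Hj Hne1) taut) (lexx t).
    have tft : tf < t by rewrite -lte_fin -EBf.
    have tf0 := le_trans (chain_nonneg Hnf) (ltW (chain_mono (ltnSn nf) Hnf Hnf1)).
    have Itf : [set u | 0 <= u < t /\ Y u = f] tf by split; [rewrite tf0 tft|apply: Ynext Hnf1].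
    have Iaj : [set u | 0 <= u < t /\ Y u = f] aj by split; [rewrite aj0 ajt|].
    have tfacf : tf <= acf := ltW (chain_mono (ltnSn nf.+1) Hnf1 Hnf2).
    have acfaj : acf <= aj := chain_le (ltnW lj) Hnf2 Hj.
    have := Hif _ acf _ Itf Iaj; rewrite tfacf acfaj => /(_ erefl) [_].
    rewrite (Ynext Hnf2) => ecf.
    by apply: (par_neq fr); rewrite -{1}ecf pcf.
  have [k' Hk'] : exists k', iter k' par pp = f.
    move: sde => [k k0 Hk]; case: k k0 Hk => [//|[|k'] _ Hk].
      by exfalso; apply: fpe; rewrite -Hk.
    by exists k'; rewrite -Hk !iterSr.
  have nf1 : forall y, sdesc pp y -> y <> f /\ y <> par f.
    move=> y [m m0 Hm]; split => ey; subst y.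
      apply: fr; apply: (@cycle_root f (k' + m)); first by rewrite addn_gt0 m0 orbT.
      by rewrite iterD Hm.
    apply: fr; apply: (@cycle_root f (k' + m).+1) => //.
    by rewrite iterSr iterD Hm.
  have ppf : pp <> par f.
    move=> e1; apply: fr; apply: (@cycle_root f k'.+1) => //.
    by rewrite iterSr -e1.
  have EI : [set u | 0 <= u < H /\ Y u = f] = [set u | 0 <= u < t /\ Y u = f].
    apply/seteqP; split => u /= [/andP [u0 uH] Yu]; split => //.
      have [tu|ut] := leP t u; last by rewrite u0.
      by exfalso; apply: (proj1 (nf1 _ (KT u _))) Yu; rewrite tu uH.
    by rewrite u0 (lt_le_trans uH (ltW tH)).
  apply: Ubuild => //.
  - move: Cf => [Hbf [tft rest]]; exists tf; split => //; split => //.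
    exact: le_trans tft (ltW tH).
  - by apply: lt_le_trans HBtf _; rewrite lee_fin ltW.
  - move=> u; split.
      move=> [/andP [u0 uH] Yu].
      have [ut|tu] := leP u t; first by apply/Hvf; rewrite u0 ut.
      exfalso; move: uH; rewrite le_eqVlt => /orP [/eqP uH|uH].
        by apply: ppf; rewrite -YH -uH.
      by apply: (proj2 (nf1 _ (KT u _))) Yu; rewrite (ltW tu) uH.
    by move=> /Hvf [/andP [u0 ut] Yu]; rewrite u0 (le_trans ut (ltW tH)).
  - by rewrite EI.
  - by rewrite EI; apply: lt_le_trans Hsf (ltW tH).
case: (pselect (exists r2, U t (par e, r2))) => [[r2 Ur2]|nr2].
  exists (e, r), (par e, r2) => -[f r'] [Uf nUf].
  case: (key f r' Uf nUf) => ef; subst f.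
    by left; rewrite (U_uniq Uf Ue).
  by right; rewrite (U_uniq Uf Ur2).
exists (e, r), (e, r) => -[f r'] [Uf nUf].
case: (key f r' Uf nUf) => ef; subst f.
  by left; rewrite (U_uniq Uf Ue).
by exfalso; apply: nr2; exists r'.
Qed.
End Det.

Theorem lemma8 (R : realType) (V : choiceType) (root : V) (par : V -> V)
  (Htree : rooted_tree root par) (Hdeg : bounded_degree root par)
  (Hoff : two_offspring root par)
  (T : R) (HT : 0 < T)
  (d : measure_display) (Omega : measurableType d) (P : probability Omega R)
  (B : Omega -> set (V * R)) (HB : bar_PPP root T P B)
  (t : R) (Ht : 0 < t) :
  P.-negligible
    [set w | exists (e : V) (r : R),
       last_crossed root par T (B w) t e r /\
       par e <> root /\
       (Hit root par T (B w) t [set par (par e)] < +oo)%E /\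
       ~ (exists a1 a2 : V * R, forall x,
            (U root par T (B w) t `\` U root par T (B w) (fine (Hit root par T (B w) t [set par (par e)]))) x ->
            x = a1 \/ x = a2)].
Proof.
have E : forall A : set Omega, A = set0 -> P.-negligible A.
  by move=> A ->; exact: negligible_set0.
apply: E; apply/seteqP; split => w //= [e [r [Hlc [pe [Hfin Hnot]]]]].
apply: Hnot; apply: (main (b:=B w) Htree _ Ht Hlc pe Hfin).
move=> e' h Hbar; exact: (proj1 (proj1 HB w e' h Hbar)).
Qed.
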